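(* Let $d \ge 2$ and $N=(d-1)^2$. For ${\bm \theta}=(\theta_1,\ldots,\theta_N)\in\mathbb{R}^N$ let $H_d({\bm \theta})$ be the $d\times d$ matrix whose first row and first column consist entirely of $1$'s and whose lower-right $(d-1)\times(d-1)$ submatrix (the core) has entries $[H_d({\bm \theta})]_{i,j}=e^{\mathrm{i}\theta_{(i-2)(d-1)+(j-1)}}$ for $2\le i,j\le d$. Define $\mathcal{V}_d:\mathbb{R}^N\to\mathbb{R}$ by $$\mathcal{V}_d({\bm \theta})=\sum_{i\neq j}\big|[H_d({\bm \theta})H_d({\bm \theta})^*]_{i,j}\big|^2,$$ and consider the gradient system $\dot{{\bm \theta}}=\Phi_d({\bm \theta}):=-\nabla\mathcal{V}_d({\bm \theta})$. Suppose ${\bm \theta}_0$ is such that $H=H_d({\bm \theta}_0)$ is a complex Hadamard matrix, i.e. $HH^*=dI_d$ (so ${\bm \theta}_0$ is a fixed point of $\Phi_d$). Then the dimension of the center subspace of the linearization $D\Phi_d|_{{\bm \theta}_0}$ (the span of generalized eigenvectors for eigenvalues with zero real part; since $D\Phi_d|_{{\bm \theta}_0}$ is symmetric this is its kernel) equals the defect $d(H)$.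
   Context: The defect $d(H)$ of a $d\times d$ complex Hadamard matrix $H$ is the dimension of the real vector space of matrices $R\in M^{d\times d}(\mathbb{R})$ satisfying the real linear system: $[R]_{i,1}=0$ for $1\le i\le d$; $[R]_{1,j}=0$ for $2\le j\le d$; and $\sum_{k=1}^d [H]_{i,k}\overline{[H]_{j,k}}\big([R]_{i,k}-[R]_{j,k}\big)=0$ for all $1\le i<j\le d$ (each such complex equation imposing its real and imaginary parts). $^*$ denotes conjugate transpose. *)

(* Defs.v *)
From HB Require Import structures.
From mathcomp Require Import all_boot all_order all_algebra.
From mathcomp Require Import all_classical all_reals all_analysis.
From mathcomp Require Import complex.
Set Implicit Arguments. Unset Strict Implicit. Unset Printing Implicit Defensive.
Import Order.TTheory GRing.Theory Num.Theory.
Import numFieldNormedType.Exports.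
Local Open Scope ring_scope.

Section HadamardDefs.
Variable R : realType.

Definition expi (t : R) : R[i] := Complex (cos t) (sin t).

Definition adjmx m n (A : 'M[R[i]]_(m, n)) : 'M[R[i]]_(n, m) :=
  (map_mx (@conjc R) A)^T.

(* H_d(theta) with d = 1 + n : first row and column all ones, core
   [H]_{i,j} = e^{i theta_{(i-2)(d-1)+(j-1)}} (1-based), i.e. the core is the
   row-major reshaping vec_mx theta of theta : 'rV_(n*n). *)
Definition Hd (n : nat) (theta : 'rV[R]_(n * n)) : 'M[R[i]]_(1 + n) :=
  block_mx (const_mx 1) (const_mx 1) (const_mx 1) (map_mx expi (vec_mx theta)).

Definition Vd (n : nat) (theta : 'rV[R]_(n * n)) : R :=
  let G := Hd theta *m adjmx (Hd theta) in
  \sum_(i < 1 + n) \sum_(j < 1 + n | j != i) complex.Re (`|G i j| ^+ 2).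

Definition Phid (n : nat) (theta : 'rV[R]_(n * n)) : 'rV[R]_(n * n) :=
  \row_k (- 'D_(delta_mx 0 k) (@Vd n) theta).

Definition DPhid (n : nat) (theta0 : 'rV[R]_(n * n)) : 'M[R]_(n * n) :=
  \matrix_(i, j) 'D_(delta_mx 0 j) (fun theta => Phid theta 0 i) theta0.

(* Dimension of the center subspace of a real square matrix A: the span of the
   generalized eigenvectors (of the complexification) for eigenvalues with zero
   real part. rs is a list of the eigenvalues (roots of the characteristic
   polynomial) and the generalized eigenspace of z is ker (A - z)^m. *)
Definition center_dim (m : nat) (A : 'M[R]_m) : nat :=
  let Ac := map_mx (real_complex R) A in
  let rs := sval (closed_field_poly_normal (char_poly Ac)) in
  \rank (\sum_(z <- undup rs | complex.Re z == 0)
           kermx (((Ac - z%:M) ^+ m)^T))%MS.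

(* The real linear system defining the defect, as a linear map
   'M[R]_d -> R^(3 d^2) whose kernel is the solution space:
   block 1: [R]_{i,1} (all i) and [R]_{1,j} (j >= 2);
   blocks 2,3: real and imaginary parts of
     sum_k H_ik conj(H_jk) (R_ik - R_jk)  for i < j. *)
Definition defect_map (d : nat) (H : 'M[R[i]]_d) (X : 'M[R]_d) :
    'rV[R]_(d * d + (d * d + d * d)) :=
  let S i j := \sum_(k < d) H i k * conjc (H j k) * real_complex R (X i k - X j k) in
  row_mx (mxvec (\matrix_(i < d, j < d)
                  (if (val j == 0%N) || (val i == 0%N) then X i j else 0)))
   (row_mx (mxvec (\matrix_(i < d, j < d) (if (val i < val j)%N then complex.Re (S i j) else 0)))
           (mxvec (\matrix_(i < d, j < d) (if (val i < val j)%N then complex.Im (S i j) else 0)))).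

Definition defect (d : nat) (H : 'M[R[i]]_d) : nat :=
  \rank (kermx (lin1_mx (fun v : 'rV[R]_(d * d) => defect_map H (vec_mx v)))).

End HadamardDefs.

(* Main.v *)
Require Import Defs.
From HB Require Import structures.
From mathcomp Require Import all_boot all_order all_algebra.
From mathcomp Require Import all_classical all_reals all_analysis.
From mathcomp Require Import complex.
Import Order.TTheory GRing.Theory Num.Theory.
Import numFieldNormedType.Exports.
Local Open Scope ring_scope.
From mathcomp Require Import ring lra.
Set Implicit Arguments. Unset Strict Implicit. Unset Printing Implicit Defensive.



Lemma deriveD1 (R : realType) (V : normedModType R) (f : V -> R^o) (a v : V) :
  'D_v f a = 'D_1 (fun h : R => f (h *: v + a)) 0.
Proof.
rewrite /derive; congr lim.
suff -> : (fun h : R => h^-1 *: ((f \o shift a) (h *: v) - f a)) =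
  (fun h : R => h^-1 *: (((fun h0 : R => f (h0 *: v + a)) \o shift 0) h%:A - f (0 *: v + a))) by [].
by apply/funext => h /=; rewrite addr0 scale0r add0r [_%:A]mulr1.
Qed.

Lemma is_derive_lin (R : realType) (V : normedModType R) (F : R -> R) (F' : R -> R)
  (L : V -> R) (a v : V) :
  (forall x : R, is_derive x (1:R) F (F' x)) ->
  (forall h, L (h *: v + a) = h * L v + L a) ->
  is_derive a v (fun x => F (L x)) (F' (L a) * L v).
Proof.
move=> dF hL.
have e : (fun h : R => F (L (h *: v + a))) = F \o (fun h => h * L v + L a).
  by apply/funext => h /=; rewrite hL.
have dg : is_derive (0:R) 1 (fun h : R => h * L v + L a) (L v).
  apply: (@is_derive_eq _ _ _ _ _ _ _ (1 * L v + 0)); last by rewrite mul1r addr0.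
  have -> : (fun h : R => h * L v + L a) = (id * cst (L v)) + cst (L a).
    by apply/funext => h.
  apply: is_deriveD.
  have := is_deriveM (@is_derive_id _ R^o (0:R) (1:R)) (@is_derive_cst _ R^o R^o (L v) (0:R) (1:R)).
  move=> H; apply: (is_derive_eq H).
  by rewrite scaler0 add0r mul1r /= [_%:A]mulr1.
have := @is_derive1_comp _ F (fun h => h * L v + L a) 0 _ _ (dF _) dg.
rewrite mul0r add0r -e => -[d1 d2].
apply: DeriveDef.
  by apply/derivable1P.
by rewrite deriveD1 d2.
Qed.

Lemma is_derive_bigsum (R : realType) (V : normedModType R) (T : Type) (r : seq T)
  (P : pred T) (F : T -> V -> R) (dF : T -> R) (a v : V) :
  (forall s, is_derive a v (F s) (dF s)) ->
  is_derive a v (fun x => \sum_(s <- r | P s) F s x) (\sum_(s <- r | P s) dF s).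
Proof.
move=> dF'; elim: r => [|s r IH].
  rewrite big_nil; have -> : (fun x : V => \sum_(s <- [::] | P s) F s x) = cst 0.
    by apply/funext => x; rewrite big_nil.
  exact: is_derive_cst.
rewrite big_cons; case Ps: (P s) => //=.
  have -> : (fun x : V => \sum_(s0 <- s :: r | P s0) F s0 x) =
            F s + (fun x => \sum_(s0 <- r | P s0) F s0 x).
    by apply/funext => x; rewrite big_cons Ps.
  exact: is_deriveD.
have -> : (fun x : V => \sum_(s0 <- s :: r | P s0) F s0 x) =
          (fun x => \sum_(s0 <- r | P s0) F s0 x).
  by apply/funext => x; rewrite big_cons Ps.
exact: IH.
Qed.

Lemma is_derive_wcos (R : realType) (V : normedModType R) (w : R) (L : V -> R) (a v : V) :
  (forall h, L (h *: v + a) = h * L v + L a) ->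
  is_derive a v (fun x => w * cos (L x)) (w * (- sin (L a)) * L v).
Proof.
move=> hL; apply: (@is_derive_lin R V (fun t => w * cos t) (fun t => w * - sin t)) => //.
Qed.

Lemma is_derive_wsin (R : realType) (V : normedModType R) (w : R) (L : V -> R) (a v : V) :
  (forall h, L (h *: v + a) = h * L v + L a) ->
  is_derive a v (fun x => w * sin (L x)) (w * cos (L a) * L v).
Proof.
move=> hL; apply: (@is_derive_lin R V (fun t => w * sin t) (fun t => w * cos t)) => //.
Qed.

Definition Ph (R : realType) (n : nat) (t : 'rV[R]_(n * n)) : 'M[R]_(1 + n) :=
  block_mx (const_mx 0) (const_mx 0) (const_mx 0) (vec_mx t).

Lemma Hd_Ph (R : realType) (n : nat) (t : 'rV[R]_(n * n)) :
  Hd t = map_mx (@expi R) (Ph t).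
Proof.
rewrite /Hd /Ph map_block_mx !map_const_mx.
have -> : expi (0 : R) = 1 by rewrite /expi cos0 sin0.
by [].
Qed.

Lemma Ph_lin (R : realType) (n : nat) (h : R) (v a : 'rV[R]_(n * n)) :
  Ph (h *: v + a) = h *: Ph v + Ph a.
Proof.
rewrite /Ph scale_block_mx add_block_mx linearP.
by congr block_mx; apply/matrixP => i j; rewrite !mxE mulr0 addr0.
Qed.

Lemma ReD (R : realType) (x y : R[i]) : complex.Re (x + y) = complex.Re x + complex.Re y.
Proof. by case: x; case: y. Qed.
Lemma ImD (R : realType) (x y : R[i]) : complex.Im (x + y) = complex.Im x + complex.Im y.
Proof. by case: x; case: y. Qed.

Lemma Re_sum (R : realType) (I : Type) (r : seq I) (P : pred I) (F : I -> R[i]) :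
  complex.Re (\sum_(i <- r | P i) F i) = \sum_(i <- r | P i) complex.Re (F i).
Proof. by apply: (big_morph _ (@ReD R) (erefl _)). Qed.
Lemma Im_sum (R : realType) (I : Type) (r : seq I) (P : pred I) (F : I -> R[i]) :
  complex.Im (\sum_(i <- r | P i) F i) = \sum_(i <- r | P i) complex.Im (F i).
Proof. by apply: (big_morph _ (@ImD R) (erefl _)). Qed.

Lemma expiJ (R : realType) (a b : R) :
  expi a * conjc (expi b) = Complex (cos (a - b)) (sin (a - b)).
Proof.
rewrite /expi cosB sinB /=. congr Complex; ring.
Qed.

Definition Lf (R : realType) (n : nat) (t : 'rV[R]_(n * n)) (i j k l : 'I_(1 + n)) : R :=
  (Ph t i k - Ph t j k) - (Ph t i l - Ph t j l).

Lemma Lf_lin (R : realType) (n : nat) (i j k l : 'I_(1 + n)) (h : R) (v a : 'rV[R]_(n * n)) :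
  Lf (h *: v + a) i j k l = h * Lf v i j k l + Lf a i j k l.
Proof. rewrite /Lf !Ph_lin !mxE; ring. Qed.

Lemma Vd_cos (R : realType) (n : nat) (t : 'rV[R]_(n * n)) :
  Vd t = \sum_i \sum_(j | j != i) \sum_k \sum_l cos (Lf t i j k l).
Proof.
rewrite /Vd; apply: eq_bigr => i _; apply: eq_bigr => j _.
rewrite -add_Re2_Im2 /=.
have -> : (Hd t *m adjmx (Hd t)) i j = \sum_k Complex (cos (Ph t i k - Ph t j k)) (sin (Ph t i k - Ph t j k)).
  rewrite Hd_Ph /adjmx !mxE; apply: eq_bigr => k _; rewrite !mxE; exact: expiJ.
rewrite Re_sum Im_sum /= !expr2 !mulr_suml.
rewrite -big_split /=; apply: eq_bigr => k _.
rewrite !mulr_sumr -big_split /=; apply: eq_bigr => l _.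
by rewrite /Lf [RHS]cosB.
Qed.

Lemma D_Vd (R : realType) (n : nat) (t v : 'rV[R]_(n * n)) :
  'D_v (@Vd R n) t =
  \sum_i \sum_(j | j != i) \sum_k \sum_l (- sin (Lf t i j k l) * Lf v i j k l).
Proof.
have -> : @Vd R n = fun t => \sum_i \sum_(j | j != i) \sum_k \sum_l cos (Lf t i j k l).
  by apply/funext => x; rewrite Vd_cos.
apply: derive_val.
apply: is_derive_bigsum => i; apply: is_derive_bigsum => j.
apply: is_derive_bigsum => k; apply: is_derive_bigsum => l.
apply: (@is_derive_lin R _ (@cos R) (fun x => - sin x) (fun t => Lf t i j k l)) => //.
by move=> h; rewrite Lf_lin.
Qed.

Definition ev (R : realType) (n : nat) (p : 'I_(n * n)) : 'rV[R]_(n * n) := delta_mx 0 p.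

Lemma Phid_sin (R : realType) (n : nat) (p : 'I_(n * n)) :
  (fun t : 'rV[R]_(n * n) => Phid t 0 p) =
  fun t => \sum_i \sum_(j | j != i) \sum_k \sum_l (Lf (ev R p) i j k l * sin (Lf t i j k l)).
Proof.
apply/funext => t; rewrite /Phid mxE D_Vd.
rewrite -sumrN; apply: eq_bigr => i _; rewrite -sumrN; apply: eq_bigr => j _.
rewrite -sumrN; apply: eq_bigr => k _; rewrite -sumrN; apply: eq_bigr => l _.
rewrite /ev; ring.
Qed.

Lemma DPhid_E (R : realType) (n : nat) (t0 : 'rV[R]_(n * n)) (p q : 'I_(n * n)) :
  DPhid t0 p q =
  \sum_i \sum_(j | j != i) \sum_k \sum_l
     (Lf (ev R p) i j k l * cos (Lf t0 i j k l) * Lf (ev R q) i j k l).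
Proof.
rewrite /DPhid mxE Phid_sin.
apply: derive_val.
apply: is_derive_bigsum => i; apply: is_derive_bigsum => j.
apply: is_derive_bigsum => k; apply: is_derive_bigsum => l.
apply: is_derive_wsin.
by move=> h; rewrite Lf_lin.
Qed.

Definition S4 (R : realType) (n : nat) (F : 'I_(1 + n) -> 'I_(1 + n) -> 'I_(1 + n) -> 'I_(1 + n) -> R) : R :=
  \sum_i \sum_(j | j != i) \sum_k \sum_l F i j k l.

Lemma S4_sum (R : realType) (n m : nat) (F : 'I_m -> 'I_(1 + n) -> 'I_(1 + n) -> 'I_(1 + n) -> 'I_(1 + n) -> R) :
  \sum_p S4 (F p) = S4 (fun i j k l => \sum_p F p i j k l).
Proof.
rewrite /S4 exchange_big; apply: eq_bigr => i _.
rewrite exchange_big; apply: eq_bigr => j _.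
rewrite exchange_big; apply: eq_bigr => k _.
by rewrite exchange_big.
Qed.

Lemma S4_mull (R : realType) (n : nat) (a : R) (F : 'I_(1 + n) -> 'I_(1 + n) -> 'I_(1 + n) -> 'I_(1 + n) -> R) :
  a * S4 F = S4 (fun i j k l => a * F i j k l).
Proof.
rewrite /S4 mulr_sumr; apply: eq_bigr => i _.
rewrite mulr_sumr; apply: eq_bigr => j _.
rewrite mulr_sumr; apply: eq_bigr => k _.
by rewrite mulr_sumr.
Qed.

Lemma Lf0 (R : realType) (n : nat) i j k l : Lf (0 : 'rV[R]_(n * n)) i j k l = 0.
Proof.
have := Lf_lin i j k l 1 (0 : 'rV[R]_(n * n)) 0.
rewrite scale1r addr0 mul1r => H; lra.
Qed.

Lemma Lf_expand (R : realType) (n : nat) (y : 'rV[R]_(n * n)) i j k l :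
  Lf y i j k l = \sum_p y 0 p * Lf (ev R p) i j k l.
Proof.
rewrite {1}(row_sum_delta y).
elim/big_rec2: _ => [|p a b _ <-]; first exact: Lf0.
by rewrite Lf_lin.
Qed.

Lemma Q_formula (R : realType) (n : nat) (t0 y : 'rV[R]_(n * n)) :
  (y *m DPhid t0 *m y^T) 0 0 =
  S4 (fun i j k l => cos (Lf t0 i j k l) * Lf y i j k l ^+ 2).
Proof.
rewrite mxE.
under eq_bigr => q _ do rewrite mxE mxE big_distrl /=.
under eq_bigr => q _ do under eq_bigr => p _ do rewrite DPhid_E -/(S4 _) S4_mull.
under eq_bigr => q _ do (under eq_bigr => p _ do rewrite mulrC S4_mull; rewrite S4_sum).
rewrite S4_sum /S4. apply: eq_bigr => i _. apply: eq_big => // j _.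
apply: eq_bigr => k _; apply: eq_bigr => l _.
rewrite expr2 (Lf_expand y) mulrA mulr_sumr; apply: eq_bigr => q _.
rewrite mulr_sumr mulr_suml; apply: eq_bigr => p _.
rewrite /=; ring.
Qed.

Lemma pair_identity (R : realType) (m : nat) (al a : 'I_m -> R) :
  \sum_k cos (al k) = 0 -> \sum_k sin (al k) = 0 ->
  \sum_k \sum_l cos (al k - al l) * (a k - a l) ^+ 2 =
  - 2 * ((\sum_k cos (al k) * a k) ^+ 2 + (\sum_k sin (al k) * a k) ^+ 2).
Proof.
move=> C0 S0.
set P := \sum_l cos (al l) * a l ^+ 2.
set Q := \sum_l sin (al l) * a l ^+ 2.
set X := \sum_k cos (al k) * a k.
set Y := \sum_k sin (al k) * a k.
have inner : forall k, \sum_l cos (al k - al l) * (a k - a l) ^+ 2 =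
   cos (al k) * P + sin (al k) * Q - (2 * (cos (al k) * a k)) * X - (2 * (sin (al k) * a k)) * Y.
  move=> k.
  have E : forall l, cos (al k - al l) * (a k - a l) ^+ 2 =
     (a k ^+ 2 * cos (al k)) * cos (al l) + (a k ^+ 2 * sin (al k)) * sin (al l)
     + cos (al k) * (cos (al l) * a l ^+ 2) + sin (al k) * (sin (al l) * a l ^+ 2)
     - (2 * (cos (al k) * a k)) * (cos (al l) * a l) - (2 * (sin (al k) * a k)) * (sin (al l) * a l).
    by move=> l; rewrite cosB; ring.
  rewrite (eq_bigr _ (fun l _ => E l)) !sumrB !big_split /=.
  rewrite -!mulr_sumr C0 S0 !mulr0 !add0r.
  by [].
rewrite (eq_bigr _ (fun k _ => inner k)) !sumrB !big_split /=.
rewrite -!mulr_suml C0 S0 !mul0r !add0r.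
rewrite -!mulr_sumr -/X -/Y; ring.
Qed.

Definition al (R : realType) (n : nat) (t : 'rV[R]_(n * n)) (i j k : 'I_(1 + n)) : R :=
  Ph t i k - Ph t j k.

Definition ReS (R : realType) (n : nat) (t0 y : 'rV[R]_(n * n)) (i j : 'I_(1 + n)) : R :=
  \sum_k cos (al t0 i j k) * al y i j k.
Definition ImS (R : realType) (n : nat) (t0 y : 'rV[R]_(n * n)) (i j : 'I_(1 + n)) : R :=
  \sum_k sin (al t0 i j k) * al y i j k.

Lemma G_entry (R : realType) (n : nat) (t : 'rV[R]_(n * n)) i j :
  (Hd t *m adjmx (Hd t)) i j = \sum_k Complex (cos (al t i j k)) (sin (al t i j k)).
Proof.
rewrite Hd_Ph /al; move: (Ph t) => P.
rewrite /adjmx !mxE; apply: eq_bigr => k _; rewrite !mxE; exact: expiJ.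
Qed.

Lemma had_sums (R : realType) (n : nat) (t0 : 'rV[R]_(n * n)) :
  Hd t0 *m adjmx (Hd t0) = (1 + n)%:R%:M ->
  forall i j, i != j -> \sum_k cos (al t0 i j k) = 0 /\ \sum_k sin (al t0 i j k) = 0.
Proof.
move=> hH i j ij; have := congr1 (fun M : 'M[R[i]]_(1 + n) => M i j) hH.
rewrite /= G_entry mxE (negPf ij) mulr0n => E.
split.
  by have := congr1 (@complex.Re R) E; rewrite Re_sum.
by have := congr1 (@complex.Im R) E; rewrite Im_sum.
Qed.

Lemma Q_neg (R : realType) (n : nat) (t0 y : 'rV[R]_(n * n)) :
  Hd t0 *m adjmx (Hd t0) = (1 + n)%:R%:M ->
  (y *m DPhid t0 *m y^T) 0 0 =
  \sum_i \sum_(j | j != i) (- 2 * (ReS t0 y i j ^+ 2 + ImS t0 y i j ^+ 2)).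
Proof.
move=> hH; rewrite Q_formula /S4; apply: eq_bigr => i _; apply: eq_bigr => j ji.
have ij : i != j by rewrite eq_sym.
have [C0 S0] := had_sums hH ij.
exact: (pair_identity (fun k => al y i j k) C0 S0).
Qed.

Lemma DPhid_sym (R : realType) (n : nat) (t0 : 'rV[R]_(n * n)) :
  (DPhid t0)^T = DPhid t0.
Proof.
apply/matrixP => p q; rewrite mxE !DPhid_E.
apply: eq_bigr => i _; apply: eq_bigr => j _; apply: eq_bigr => k _; apply: eq_bigr => l _.
ring.
Qed.

Definition Bf (R : realType) (m : nat) (D : 'M[R]_m) (x y : 'rV[R]_m) : R :=
  (x *m D *m y^T) 0 0.

Lemma Bf_addl (R : realType) m (D : 'M[R]_m) x1 x2 y : Bf D (x1 + x2) y = Bf D x1 y + Bf D x2 y.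
Proof. by rewrite /Bf !mulmxDl mxE. Qed.
Lemma Bf_scalel (R : realType) m (D : 'M[R]_m) (t : R) x y : Bf D (t *: x) y = t * Bf D x y.
Proof. by rewrite /Bf -!scalemxAl mxE. Qed.
Lemma Bf_addr (R : realType) m (D : 'M[R]_m) x y1 y2 : Bf D x (y1 + y2) = Bf D x y1 + Bf D x y2.
Proof. by rewrite /Bf linearD /= mulmxDr mxE. Qed.
Lemma Bf_scaler (R : realType) m (D : 'M[R]_m) (t : R) x y : Bf D x (t *: y) = t * Bf D x y.
Proof. by rewrite /Bf linearZ /= -scalemxAr mxE. Qed.
Lemma Bf_sym (R : realType) m (D : 'M[R]_m) x y : D^T = D -> Bf D x y = Bf D y x.
Proof.
move=> sD; rewrite /Bf -[in LHS](trmxK (x *m D *m y^T)) [in LHS]mxE.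
by rewrite !trmx_mul trmxK sD mulmxA.
Qed.
Lemma Bf_delta (R : realType) m (D : 'M[R]_m) x q : Bf D x (delta_mx 0 q) = (x *m D) 0 q.
Proof. by rewrite /Bf trmx_delta -colE mxE. Qed.

Lemma nsd_ker (R : realType) m (D : 'M[R]_m) (x : 'rV[R]_m) :
  D^T = D -> (forall z, Bf D z z <= 0) -> Bf D x x = 0 -> x *m D = 0.
Proof.
move=> sD nsd Q0; apply/rowP => q; rewrite [RHS]mxE.
pose z : 'rV[R]_m := delta_mx 0 q.
pose b : R := (x *m D) 0 q.
pose s := - Bf D z z.
have s0 : 0 <= s by rewrite /s oppr_ge0.
have key : forall t, Bf D (x + t *: z) (x + t *: z) = 2 * t * b - t ^+ 2 * s.
  move=> t; rewrite !Bf_addl !Bf_addr !Bf_scalel !Bf_scaler.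
  rewrite (@Bf_sym R m D z x sD) Q0 /s /b -Bf_delta -/z; ring.
have := nsd (x + (b / (1 + s)) *: z); rewrite key.
set u := b / (1 + s).
have bu : b = u * (1 + s) by rewrite /u mulfVK // lt0r_neq0 // ltr_wpDr.
rewrite bu => H.
have H2 : u ^+ 2 * (2 + s) <= 0.
  suff -> : u ^+ 2 * (2 + s) = 2 * u * (u * (1 + s)) - u ^+ 2 * s by [].
  ring.
have u0 : u = 0.
  have h2 : 0 < 2 + s by rewrite ltr_wpDr.
  have : u ^+ 2 <= 0 by rewrite -(pmulr_lle0 _ h2).
  by rewrite le_eqVlt ltNge sqr_ge0 orbF sqrf_eq0 => /eqP.
by rewrite -/b bu u0 mul0r.
Qed.

Lemma sq2_eq0 (R : realType) (a b : R) : -2 * (a ^+ 2 + b ^+ 2) = 0 -> a = 0 /\ b = 0.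
Proof.
move=> /eqP; rewrite mulf_eq0 oppr_eq0 pnatr_eq0 /= paddr_eq0 ?sqr_ge0 // !sqrf_eq0.
by case/andP => /eqP -> /eqP ->.
Qed.

Lemma sq2_le0 (R : realType) (a b : R) : -2 * (a ^+ 2 + b ^+ 2) <= 0.
Proof. by rewrite mulNr oppr_le0 mulr_ge0 // addr_ge0 // sqr_ge0. Qed.

Lemma ker_char (R : realType) (n : nat) (t0 y : 'rV[R]_(n * n)) :
  Hd t0 *m adjmx (Hd t0) = (1 + n)%:R%:M ->
  y *m DPhid t0 = 0 <-> (forall i j, i != j -> ReS t0 y i j = 0 /\ ImS t0 y i j = 0).
Proof.
move=> hH; split.
  move=> yD i j ij.
  have : Bf (DPhid t0) y y = 0 by rewrite /Bf yD mul0mx mxE.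
  rewrite /Bf Q_neg // => /eqP; rewrite -oppr_eq0 -sumrN => /eqP S0.
  have nn : forall i0 : 'I_(1 + n), true -> 0 <= - (\sum_(j0 | j0 != i0) -2 * (ReS t0 y i0 j0 ^+ 2 + ImS t0 y i0 j0 ^+ 2)).
    by move=> i0 _; rewrite oppr_ge0 sumr_le0 // => j0 _; exact: sq2_le0.
  have := psumr_eq0P nn S0 (i:=i) isT.
  move=> /eqP; rewrite oppr_eq0 => /eqP S1.
  have nn2 : forall j0 : 'I_(1 + n), j0 != i -> 0 <= - (-2 * (ReS t0 y i j0 ^+ 2 + ImS t0 y i j0 ^+ 2)).
    by move=> j0 _; rewrite oppr_ge0 sq2_le0.
  move/eqP: S1; rewrite -oppr_eq0 -sumrN => /eqP S1.
  have ji : j != i by rewrite eq_sym.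
  have := psumr_eq0P nn2 S1 ji; move=> /eqP; rewrite oppr_eq0 => /eqP.
  exact: sq2_eq0.
move=> H; apply: nsd_ker; first exact: DPhid_sym.
  move=> z; rewrite /Bf Q_neg //; apply: sumr_le0 => i _; apply: sumr_le0 => j _.
  exact: sq2_le0.
rewrite /Bf Q_neg //; apply: big1 => i _; apply: big1 => j ji.
have ij : i != j by rewrite eq_sym.
by have [-> ->] := H i j ij; rewrite expr0n /= addr0 mulr0.
Qed.

Lemma Ph_entry0 (R : realType) (n : nat) (y : 'rV[R]_(n * n)) (i j : 'I_(1 + n)) :
  (val j == 0%N) || (val i == 0%N) -> Ph y i j = 0.
Proof.
rewrite /Ph !mxE.
case: splitP => [a ea|a ea]; rewrite !mxE; case: splitP => [b eb|b eb]; rewrite ?mxE //.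
move: ea eb; case: i => [i ?]; case: j => [j ?] /= -> ->.
by rewrite !add1n.
Qed.


Lemma alN (R : realType) (n : nat) (t : 'rV[R]_(n * n)) i j k : al t j i k = - al t i j k.
Proof. by rewrite /al opprB. Qed.

Lemma ReS_sym (R : realType) (n : nat) (t0 y : 'rV[R]_(n * n)) i j : ReS t0 y j i = - ReS t0 y i j.
Proof. rewrite /ReS -sumrN; apply: eq_bigr => k _; rewrite (alN t0) (alN y) cosN mulrN. by []. Qed.
Lemma ImS_sym (R : realType) (n : nat) (t0 y : 'rV[R]_(n * n)) i j : ImS t0 y j i = ImS t0 y i j.
Proof. rewrite /ImS; apply: eq_bigr => k _; rewrite (alN t0) (alN y) sinN mulrNN. by []. Qed.

Lemma S_entry (R : realType) (n : nat) (t0 y : 'rV[R]_(n * n)) i j :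
  \sum_(k < 1 + n) Hd t0 i k * conjc (Hd t0 j k) * real_complex R (Ph y i k - Ph y j k)
  = Complex (ReS t0 y i j) (ImS t0 y i j).
Proof.
rewrite /ReS /ImS.
have -> : \sum_(k < 1 + n) Hd t0 i k * conjc (Hd t0 j k) * real_complex R (Ph y i k - Ph y j k) =
   \sum_(k < 1 + n) Complex (cos (al t0 i j k) * al y i j k) (sin (al t0 i j k) * al y i j k).
  apply: eq_bigr => k _.
  rewrite Hd_Ph /al; move: (Ph t0) => P; rewrite !mxE expiJ /=.
  congr Complex; ring.
elim/big_rec3: _ => [|k a b c _ ->] //.
Qed.

Lemma defect_Ph (R : realType) (n : nat) (t0 y : 'rV[R]_(n * n)) :
  defect_map (Hd t0) (Ph y) = 0 <->
  (forall i j, i != j -> ReS t0 y i j = 0 /\ ImS t0 y i j = 0).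
Proof.
rewrite /defect_map /=; split.
  move=> /eqP; rewrite !row_mx_eq0 !mxvec_eq0 => /andP[_ /andP[/eqP B0 /eqP C0]].
  have key : forall i j : 'I_(1 + n), (i < j)%N -> ReS t0 y i j = 0 /\ ImS t0 y i j = 0.
    move=> i j ij; split.
      by have := congr1 (fun M : 'M[R]_(1 + n) => M i j) B0; rewrite /= !mxE ij S_entry.
    by have := congr1 (fun M : 'M[R]_(1 + n) => M i j) C0; rewrite /= !mxE ij S_entry.
  move=> i j; case: (ltngtP i j) => [ij|ji|eij] nij.
  - exact: key.
  - have [h1 h2] := key j i ji.
    by rewrite ReS_sym h1 oppr0 ImS_sym h2.
  - by move: nij; rewrite (val_inj eij) eqxx.
move=> H; apply/eqP; rewrite !row_mx_eq0 !mxvec_eq0; apply/andP; split; [|apply/andP; split];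
  apply/eqP/matrixP => i j; rewrite mxE [RHS]mxE.
- by case: ifP => // h; exact: Ph_entry0.
- case: ifP => // ij; rewrite S_entry /=.
  have nij : i != j by rewrite neq_ltn ij.
  by have [-> _] := H i j nij.
- case: ifP => // ij; rewrite S_entry /=.
  have nij : i != j by rewrite neq_ltn ij.
  by have [_ ->] := H i j nij.
Qed.

Lemma lin1_mx_mul (R : realType) m p (f : 'rV[R]_m -> 'rV[R]_p) :
  (forall (h : R) v a, f (h *: v + a) = h *: f v + f a) ->
  forall u, u *m lin1_mx f = f u.
Proof.
move=> hf u.
have f0 : f 0 = 0.
  have := hf 1 0 0; rewrite !scale1r addr0 => E.
  by apply: (addrI (f 0)); rewrite addr0 -E.
rewrite mulmx_sum_row {2}(row_sum_delta u).
elim/big_rec2: _ => [|j a b _ ->]; first by rewrite f0.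
rewrite hf; congr (_ *: _ + _); apply/rowP => k; rewrite !mxE.
by [].
Qed.

Lemma Re_lin (R : realType) (h : R) (z w : R[i]) :
  complex.Re ((real_complex R h) * z + w) = h * complex.Re z + complex.Re w.
Proof. by case: z; case: w => a b c d /=; ring. Qed.
Lemma Im_lin (R : realType) (h : R) (z w : R[i]) :
  complex.Im ((real_complex R h) * z + w) = h * complex.Im z + complex.Im w.
Proof. by case: z; case: w => a b c d /=; ring. Qed.

Lemma defect_lin (R : realType) (d : nat) (H : 'M[R[i]]_d) (h : R) (X Y : 'M[R]_d) :
  defect_map H (h *: X + Y) = h *: defect_map H X + defect_map H Y.
Proof.
rewrite /defect_map /= !scale_row_mx !add_row_mx -!linearZ -!linearD /=.
have SL : forall i j,
  \sum_(k < d) H i k * conjc (H j k) * real_complex R ((h *: X + Y) i k - (h *: X + Y) j k) =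
  (real_complex R h) * (\sum_(k < d) H i k * conjc (H j k) * real_complex R (X i k - X j k)) +
  \sum_(k < d) H i k * conjc (H j k) * real_complex R (Y i k - Y j k).
  move=> i j; rewrite mulr_sumr -big_split; apply: eq_bigr => k _.
  rewrite !mxE !rmorphB !rmorphD !rmorphM /=; ring.
congr row_mx; [|congr row_mx]; congr mxvec; apply/matrixP => i j; rewrite !mxE.
- by case: ifP => _; rewrite ?mulr0 ?addr0.
- by case: ifP => _; rewrite ?mulr0 ?addr0 // SL Re_lin.
- by case: ifP => _; rewrite ?mulr0 ?addr0 // SL Im_lin.
Qed.

Lemma lo0 (n : nat) (k : 'I_(1 + n)) (c : 'I_1) : nat_of_ord k = nat_of_ord c -> val k == 0%N.
Proof. by case: k => k hk; case: c => c hc /= ->; move: hc; rewrite ltnS leqn0. Qed.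

Lemma X_Ph (R : realType) (n : nat) (H : 'M[R[i]]_(1 + n)) (X : 'M[R]_(1 + n)) :
  defect_map H X = 0 -> X = Ph (mxvec (drsubmx X)).
Proof.
rewrite /defect_map /= => /eqP; rewrite !row_mx_eq0 !mxvec_eq0 => /andP[/eqP A0 _].
have A i j : (val j == 0%N) || (val i == 0%N) -> X i j = 0.
  by move=> h; have := congr1 (fun M : 'M[R]_(1 + n) => M i j) A0; rewrite /= !mxE h.
apply/matrixP => i j; rewrite /Ph mxvecK !mxE.
case: splitP => [a ea|a ea]; rewrite !mxE; case: splitP => [b eb|b eb]; rewrite !mxE.
- by apply: A; rewrite (lo0 ea) orbT.
- by apply: A; rewrite (lo0 ea) orbT.
- by apply: A; rewrite (lo0 eb).
- by congr (X _ _); apply: val_inj.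
Qed.

Definition Pm (R : realType) (n : nat) : 'M[R]_(n * n, (1 + n) * (1 + n)) :=
  lin1_mx (fun x : 'rV[R]_(n * n) => mxvec (Ph x)).

Lemma Pm_mul (R : realType) (n : nat) (x : 'rV[R]_(n * n)) : x *m Pm R n = mxvec (Ph x).
Proof. by apply: lin1_mx_mul => h v a; rewrite Ph_lin linearP. Qed.

Lemma g_mul (R : realType) (n : nat) (H : 'M[R[i]]_(1 + n)) (u : 'rV[R]_((1 + n) * (1 + n))) :
  u *m lin1_mx (fun v : 'rV[R]_((1 + n) * (1 + n)) => defect_map H (vec_mx v)) = defect_map H (vec_mx u).
Proof. by apply: lin1_mx_mul => h v a; rewrite linearP defect_lin. Qed.

Lemma Pm_free (R : realType) (n : nat) : row_free (Pm R n).
Proof.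
rewrite -kermx_eq0; apply/eqP/row_matrixP => i; rewrite row0.
set r := row i _.
have : r *m Pm R n = 0 by rewrite /r -row_mul mulmx_ker row0.
rewrite Pm_mul => /eqP; rewrite mxvec_eq0 => /eqP Pr0.
have : vec_mx r = 0.
  have e : drsubmx (Ph r) = vec_mx r by rewrite /Ph block_mxKdr.
  by rewrite -e Pr0; apply/matrixP => a b; rewrite !mxE.
by move=> h; rewrite -[r]vec_mxK h linear0.
Qed.

Lemma defect_rank (R : realType) (n : nat) (t0 : 'rV[R]_(n * n)) :
  Hd t0 *m adjmx (Hd t0) = (1 + n)%:R%:M ->
  defect (Hd t0) = \rank (kermx (DPhid t0)).
Proof.
move=> hH; rewrite /defect.
rewrite -(mxrankMfree _ (Pm_free R n)).
apply/esym/eqmx_rank; apply/andP; split.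
  apply/row_subP => i; rewrite row_mul; apply/sub_kermxP.
  rewrite g_mul Pm_mul mxvecK.
  apply/defect_Ph/ker_char => //.
  by rewrite -row_mul mulmx_ker row0.
apply/row_subP => i.
set u := row i _.
have gu : defect_map (Hd t0) (vec_mx u) = 0.
  by rewrite -g_mul /u -row_mul mulmx_ker row0.
have EX := X_Ph gu.
set x := mxvec (drsubmx (vec_mx u)) in EX.
have -> : u = x *m Pm R n by rewrite Pm_mul -EX vec_mxK.
apply: submxMr; apply/sub_kermxP.
apply/(ker_char _ hH)/defect_Ph.
by rewrite -EX.
Qed.

Lemma ReMr (R : realType) (w : R[i]) (r : R) : complex.Re (w * real_complex R r) = complex.Re w * r.
Proof. by case: w => a b /=; ring. Qed.
Lemma ImMr (R : realType) (w : R[i]) (r : R) : complex.Im (w * real_complex R r) = complex.Im w * r.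
Proof. by case: w => a b /=; ring. Qed.
Lemma ReM0 (R : realType) (z w : R[i]) : complex.Re z = 0 -> complex.Re (z * w) = - complex.Im z * complex.Im w.
Proof. by case: z => a b; case: w => c d /= ->; ring. Qed.
Lemma ImM0 (R : realType) (z w : R[i]) : complex.Re z = 0 -> complex.Im (z * w) = complex.Im z * complex.Re w.
Proof. by case: z => a b; case: w => c d /= ->; ring. Qed.

Lemma sym_eig_imag (R : realType) m (D : 'M[R]_m) (z : R[i]) :
  D^T = D -> root (char_poly (map_mx (real_complex R) D)) z -> complex.Re z = 0 -> z = 0.
Proof.
move=> sD; rewrite -eigenvalue_root_char => /eigenvalueP [v Hv vn0] Rez.
pose x := map_mx (@complex.Re R) v; pose y := map_mx (@complex.Im R) v.
pose b := complex.Im z.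
have hx : x *m D = (- b) *: y.
  apply/rowP => q; have := congr1 (fun M : 'rV[R[i]]_m => complex.Re (M 0 q)) Hv.
  rewrite /= !mxE Re_sum (ReM0 _ Rez) => <-.
  by apply: eq_bigr => p _; rewrite !mxE ReMr.
have hy : y *m D = b *: x.
  apply/rowP => q; have := congr1 (fun M : 'rV[R[i]]_m => complex.Im (M 0 q)) Hv.
  rewrite /= !mxE Im_sum (ImM0 _ Rez) => <-.
  by apply: eq_bigr => p _; rewrite !mxE ImMr.
have := @Bf_sym R m D x y sD.
rewrite /Bf hx hy -!scalemxAl [in LHS]mxE [in RHS]mxE => E.
have b0 : b = 0.
  apply/eqP; apply/negP => /negP bn0.
  have S0 : \sum_q (x 0 q ^+ 2 + y 0 q ^+ 2) = 0.
    rewrite big_split /=.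
    have : b * ((x *m x^T) 0 0 + (y *m y^T) 0 0) = 0 by rewrite mulrDr; lra.
    move/eqP; rewrite mulf_eq0 (negPf bn0) /= => /eqP.
    have N : forall w : 'rV[R]_m, (w *m w^T) 0 0 = \sum_q w 0 q ^+ 2.
      by move=> w; rewrite mxE; apply: eq_bigr => q _; rewrite expr2; congr (_ * _); rewrite mxE.
    by rewrite !N.
  apply: (negP vn0); apply/eqP/rowP => q; rewrite mxE.
  have := psumr_eq0P (fun q _ => addr_ge0 (sqr_ge0 (x 0 q)) (sqr_ge0 (y 0 q))) S0 (i := q) isT.
  move/eqP; rewrite paddr_eq0 ?sqr_ge0 // !sqrf_eq0 !mxE => /andP[/eqP h1 /eqP h2].
  by move: h1 h2; case: (v 0 q) => c d /= -> ->.
by apply/eqP; rewrite eq_complex /= Rez -/b b0 !eqxx.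
Qed.

Lemma sym_ker_sq (R : realType) m (D : 'M[R]_m) (u : 'rV[R]_m) :
  D^T = D -> u *m D *m D = 0 -> u *m D = 0.
Proof.
move=> sD H; set w := u *m D.
have N : (w *m w^T) 0 0 = \sum_q w 0 q ^+ 2.
  by rewrite mxE; apply: eq_bigr => q _; rewrite expr2; congr (_ * _); rewrite mxE.
have : (w *m w^T) 0 0 = 0.
  by rewrite /w trmx_mul sD mulmxA H mul0mx mxE.
rewrite N => S0; apply/rowP => q; rewrite [RHS]mxE.
have := psumr_eq0P (fun q _ => sqr_ge0 (w 0 q)) S0 (i := q) isT.
by move/eqP; rewrite sqrf_eq0 => /eqP.
Qed.

Lemma ker_pow (R : realType) m (D : 'M[R]_m) (u : 'rV[R]_m) k :
  D^T = D -> u *m D ^+ k.+1 = 0 -> u *m D = 0.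
Proof.
move=> sD; elim: k u => [|k IH] u; first by rewrite expr1.
have e : forall j, D ^+ j *m D = D ^+ j.+1 by move=> j; rewrite exprSr mulmxE.
rewrite -e mulmxA => H.
apply: IH; rewrite -e mulmxA; apply: sym_ker_sq => //.
by rewrite -(mulmxA u) e.
Qed.

Lemma trmx_pow (R : realType) m (D : 'M[R]_m) k : D^T = D -> (D ^+ k)^T = D ^+ k.
Proof.
move=> sD; elim: k => [|k IH]; first by rewrite expr0 trmx1.
by rewrite [in LHS]exprS -mulmxE trmx_mul IH sD mulmxE -exprSr.
Qed.

Lemma map_pow (R : realType) m (D : 'M[R]_m) k :
  (map_mx (real_complex R) D) ^+ k = map_mx (real_complex R) (D ^+ k).
Proof.
elim: k => [|k IH]; first by rewrite !expr0 map_mx1.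
by rewrite !exprS IH -!mulmxE map_mxM.
Qed.

Lemma ker_pow_eq (R : realType) m (D : 'M[R]_m) k :
  D^T = D -> (kermx (D ^+ k.+1) == kermx D)%MS.
Proof.
move=> sD; apply/andP; split; apply/row_subP => i; apply/sub_kermxP.
  apply: (ker_pow (k := k)) => //.
  by rewrite -row_mul mulmx_ker row0.
have : row i (kermx D) *m D = 0 by rewrite -row_mul mulmx_ker row0.
have e : D *m D ^+ k = D ^+ k.+1 by rewrite exprS mulmxE.
by move=> H; rewrite -e mulmxA H mul0mx.
Qed.

Lemma center_sym (R : realType) k (D : 'M[R]_k.+1) :
  D^T = D -> center_dim D = \rank (kermx D).
Proof.
move=> sD; rewrite /center_dim /=.
case: (closed_field_poly_normal _) => rs Hrs /=.
set Ac := map_mx (real_complex R) D in Hrs *.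
have rootrs : forall z, (z \in rs) = root (char_poly Ac) z.
  by move=> z; rewrite Hrs (monicP (char_poly_monic _)) scale1r root_prod_XsubC.
rewrite big_seq_cond (eq_bigl (fun z => (z \in undup rs) && (z == 0))); last first.
  move=> z /=; case zin: (z \in undup rs) => //=.
  apply/eqP/eqP => [h|->//]; apply: sym_eig_imag sD _ h.
  by rewrite -rootrs -mem_undup.
rewrite -big_seq_cond.
case: (boolP (0 \in rs)) => in0.
  rewrite -big_filter filter_pred1_uniq ?undup_uniq ?mem_undup // big_seq1.
  have -> : Ac - 0%:M = Ac by apply/matrixP => i j; rewrite !mxE mul0rn subr0.
  rewrite /Ac map_pow map_trmx -map_kermx mxrank_map trmx_pow //.
  exact: eqmx_rank (ker_pow_eq k sD).
rewrite big_seq_cond big1; last first.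
  move=> z /andP[zin /eqP z0].
  by move: zin; rewrite z0 mem_undup (negPf in0).
rewrite mxrank0.
apply/esym/eqP; rewrite mxrank_eq0; apply/eqP/row_matrixP => i; rewrite row0.
apply/eqP; apply: contraT => nz; rewrite -(negPf in0).
set u := row i (kermx D) in nz *.
have uD : u *m D = 0 by rewrite /u -row_mul mulmx_ker row0.
rewrite rootrs -eigenvalue_root_char; apply/eigenvalueP.
exists (map_mx (real_complex R) u); last by rewrite map_mx_eq0.
by rewrite /Ac -map_mxM uD map_mx0 scale0r.
Qed.


Lemma center_sym' (R : realType) m (D : 'M[R]_m) :
  (0 < m)%N -> D^T = D -> center_dim D = \rank (kermx D).
Proof. by case: m D => [//|k] D _ sD; exact: center_sym. Qed.

Unset Implicit Arguments.

(* d = 1 + n, so d >= 2 is 1 <= n; N = (d-1)^2 = n * n. *)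
Theorem mainTheorem1 (R : realType) (n : nat) (hn : (1 <= n)%N)
    (theta0 : 'rV[R]_(n * n)) :
  Hd theta0 *m adjmx (Hd theta0) = (1 + n)%:R%:M ->
  center_dim (DPhid theta0) = defect (Hd theta0).
Proof.
move=> hH; rewrite (defect_rank hH) center_sym' //.
  by rewrite muln_gt0 hn.
exact: DPhid_sym.
Qed.
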